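(* Let $p$ be a random joint choice rule on a finite set $X$, with Möbius inverse $q$. A distribution $\nu\in\Delta(\mathcal{L}(X))$ and a transition function $t$ are a consumption dependent random utility representation of $p$, i.e. $$p(x,y,A,B)=\sum_{\succ\in N(x,A)}\sum_{\succ'\in N(y,B)}\nu(\succ)\,t_{\succ'}(x,\succ)\quad\text{for all } A,B\in\mathcal{X},\ (x,y)\in A\times B,$$ if and only if for all $A,B\in\mathcal{X}$ and all $(x,y)\in A\times B$, $$q(x,y,A,B)=\sum_{\succ\in I(x,A)}\sum_{\succ'\in I(y,B)}\nu(\succ)\,t_{\succ'}(x,\succ).$$
   Context: $X$ is finite, $\mathcal{X}$ the nonempty subsets of $X$, $\mathcal{L}(X)$ the linear orders on $X$. $N(x,A)=\{\succ: x\succ y\ \forall y\in A\setminus\{x\}\}$ and $I(x,A)=\{\succ : z\succ x\ \forall z\in X\setminus A,\ x\succ y\ \forall y\in A\setminus\{x\}\}$. A transition function is any map $t:X\times\mathcal{L}(X)\to\Delta(\mathcal{L}(X))$, with $t_{\succ'}(x,\succ)$ the probability of $\succ'$ under $t(x,\succ)$. A random joint choice rule assigns to each $A,B\in\mathcal{X}$ and $(x,y)\in A\times B$ a number $p(x,y,A,B)\ge 0$ with $\sum_{x\in A}\sum_{y\in B}p(x,y,A,B)=1$. Its Möbius inverse $q$ is the unique function with $p(x,y,A,B)=\sum_{A\subseteq A'\subseteq X}\sum_{B\subseteq B'\subseteq X}q(x,y,A',B')$ for all such $(x,y,A,B)$. *)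

(* Defs.v *)
From HB Require Import structures.
From mathcomp Require Import all_boot all_order all_algebra.
Set Implicit Arguments. Unset Strict Implicit. Unset Printing Implicit Defensive.
Import Order.TTheory GRing.Theory Num.Theory.
Local Open Scope ring_scope.

Section Defs.
Variable X : finType.

Definition is_linord (r : {ffun X -> {ffun X -> bool}}) : bool :=
  [&& [forall x, ~~ r x x],
      [forall x, forall y, forall z, r x y && r y z ==> r x z] &
      [forall x, forall y, (x != y) ==> r x y || r y x]].

Definition linord := {r : {ffun X -> {ffun X -> bool}} | is_linord r}.

(* succ r x y  means  x ≻ y  under the order r *)
Definition succ (r : linord) (x y : X) : bool := val r x y.

Definition Nset (x : X) (A : {set X}) : pred linord :=
  fun r => [forall y, (y \in A) && (y != x) ==> succ r x y].

Definition Iset (x : X) (A : {set X}) : pred linord :=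
  fun r => [forall z, (z \notin A) ==> succ r z x] &&
           [forall y, (y \in A) && (y != x) ==> succ r x y].

Variable R : realFieldType.

Definition is_rjcr (p : X -> X -> {set X} -> {set X} -> R) : Prop :=
  (forall (A B : {set X}) x y, x \in A -> y \in B -> 0 <= p x y A B) /\
  (forall A B : {set X}, A != set0 -> B != set0 ->
     \sum_(x in A) \sum_(y in B) p x y A B = 1).

Definition is_mobius_inverse (p q : X -> X -> {set X} -> {set X} -> R) : Prop :=
  forall (A B : {set X}) x y, x \in A -> y \in B ->
    p x y A B = \sum_(A' : {set X} | A \subset A')
                  \sum_(B' : {set X} | B \subset B') q x y A' B'.

Definition is_dist (nu : linord -> R) : Prop :=
  (forall r, 0 <= nu r) /\ \sum_(r : linord) nu r = 1.

(* t : X × L(X) → Δ(L(X)); t x r r' = t_{r'}(x, r) *)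
Definition is_transition (t : X -> linord -> linord -> R) : Prop :=
  forall x r, is_dist (t x r).

End Defs.

(* Main.v *)
Require Import Defs.
From HB Require Import structures.
From mathcomp Require Import all_boot all_order all_algebra.
From mathcomp Require Import zify.
Import Order.TTheory GRing.Theory Num.Theory.
Local Open Scope ring_scope.

Section Aux.
Variable X : finType.
Variable R : realFieldType.

Lemma lo_irr (r : linord X) x : ~~ succ r x x.
Proof. by case/and3P: (valP r) => /forallP H _ _; apply: H. Qed.

Lemma lo_trans (r : linord X) x y z : succ r x y -> succ r y z -> succ r x z.
Proof.
case/and3P: (valP r) => _ /forallP H _ h1 h2.
by move: (H x) => /forallP /(_ y) /forallP /(_ z) /implyP; apply; rewrite /succ in h1 h2 *; rewrite h1 h2.
Qed.

Lemma lo_total (r : linord X) x y : x != y -> succ r x y || succ r y x.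
Proof.
case/and3P: (valP r) => _ _ /forallP H h.
by move: (H x) => /forallP /(_ y) /implyP; apply.
Qed.

Lemma lo_asym (r : linord X) x y : succ r x y -> ~~ succ r y x.
Proof.
move=> h; apply/negP => h'; by move: (lo_irr r x); rewrite (@lo_trans r x y x h h').
Qed.

Definition up (r : linord X) x : {set X} := [set z | ~~ succ r z x].

Lemma Iset_up (x : X) (A : {set X}) (r : linord X) : Iset x A r = (A == up r x).
Proof.
apply/idP/idP.
- case/andP => /forallP H1 /forallP H2; apply/eqP/setP => z; rewrite /up inE.
  case zA: (z \in A).
  + case: (eqVneq z x) => [->|zx]; first by rewrite lo_irr.
    by apply/esym; apply: (@lo_asym r); move: (H2 z); rewrite zA zx /=.
  + by move: (H1 z); rewrite zA /= => ->.
- move/eqP => ->; apply/andP; split; apply/forallP => z; idtac.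
  + by rewrite /up inE negbK; apply/implyP.
  + rewrite /up inE; apply/implyP => /andP [h zx].
    by move: (@lo_total r _ _ zx); rewrite (negbTE h).
Qed.

Lemma Nset_up (x : X) (A : {set X}) (r : linord X) : x \in A -> Nset x A r = (A \subset up r x).
Proof.
move=> xA; apply/idP/idP.
- move/forallP => H; apply/subsetP => z zA; rewrite /up inE.
  case: (eqVneq z x) => [->|zx]; first by rewrite lo_irr.
  by apply: (@lo_asym r); move: (H z); rewrite zA zx.
- move/subsetP => H; apply/forallP => z; apply/implyP => /andP [zA zx].
  move: (H z zA); rewrite /up inE => h.
  by move: (@lo_total r _ _ zx); rewrite (negbTE h).
Qed.

Lemma sum_N x (A : {set X}) (f : linord X -> R) : x \in A ->
  \sum_(r | Nset x A r) f r =
  \sum_(A' : {set X} | A \subset A') \sum_(r | Iset x A' r) f r.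
Proof.
move=> xA.
under [RHS]eq_bigr do rewrite big_mkcond.
rewrite exchange_big /= big_mkcond; apply: eq_bigr => r _.
rewrite big_mkcond /= (bigD1 (up r x)) //= big1 ?addr0.
- by rewrite Nset_up // Iset_up eqxx; case: (A \subset up r x).
- move=> A' /negbTE h; rewrite Iset_up h; by case: (A \subset A').
Qed.

Lemma sum_NN x y (A B : {set X}) (g : linord X -> linord X -> R) :
  x \in A -> y \in B ->
  \sum_(r | Nset x A r) \sum_(r' | Nset y B r') g r r' =
  \sum_(A' : {set X} | A \subset A') \sum_(B' : {set X} | B \subset B')
    \sum_(r | Iset x A' r) \sum_(r' | Iset y B' r') g r r'.
Proof.
move=> xA yB.
under eq_bigr do rewrite (sum_N _ _ _ yB).
rewrite exchange_big /=.
rewrite [RHS]exchange_big /=; apply: eq_bigr => B' _.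
by rewrite (sum_N _ _ _ xA).
Qed.

End Aux.

Theorem theorem4 (X : finType) (R : realFieldType)
  (p q : X -> X -> {set X} -> {set X} -> R)
  (nu : linord X -> R) (t : X -> linord X -> linord X -> R) :
  is_rjcr p -> is_mobius_inverse p q -> is_dist nu -> is_transition t ->
  (forall (A B : {set X}) (x y : X), x \in A -> y \in B ->
     p x y A B = \sum_(r : linord X | Nset x A r) \sum_(r' : linord X | Nset y B r')
                   nu r * t x r r')
  <->
  (forall (A B : {set X}) (x y : X), x \in A -> y \in B ->
     q x y A B = \sum_(r : linord X | Iset x A r) \sum_(r' : linord X | Iset y B r')
                   nu r * t x r r').
Proof.
move=> _ Hm _ _; split => H.
- move=> A0 B0 x y xA0 yB0.
  pose g (A B : {set X}) := \sum_(r : linord X | Iset x A r)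
     \sum_(r' : linord X | Iset y B r') nu r * t x r r'.
  pose d A B := q x y A B - g A B.
  have key : forall A B : {set X}, x \in A -> y \in B ->
    \sum_(A' : {set X} | A \subset A') \sum_(B' : {set X} | B \subset B') d A' B' = 0.
  { move=> A B xA yB.
    under eq_bigr do rewrite sumrB.
    rewrite sumrB -Hm // /g -sum_NN // -H //; exact: subrr. }
  suff: forall n (A B : {set X}), x \in A -> y \in B -> (#|~: A| + #|~: B| < n)%N -> d A B = 0.
    by move=> /(_ _ A0 B0 xA0 yB0 (ltnSn _)) /eqP; rewrite subr_eq0 => /eqP.
  elim=> // n IH A B xA yB hn.
  have := key A B xA yB.
  rewrite (bigD1 A) //= (bigD1 B) //= big1 ?addr0; last first.
    move=> B' /andP [sB nB]; apply: IH => //; first exact: (subsetP sB).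
    have pB : B \proper B' by rewrite properEneq eq_sym nB.
    have := proper_card pB; have := cardsC B; have := cardsC B'. lia.
  rewrite big1 ?addr0 //.
  move=> A' /andP [sA nA]; apply: big1 => B' sB; apply: IH.
  + exact: (subsetP sA).
  + exact: (subsetP sB).
  + have pA : A \proper A' by rewrite properEneq eq_sym nA.
    have := proper_card pA; have := cardsC A; have := cardsC A'.
    have hB : ~: B' \subset ~: B by rewrite setCS.
    have := subset_leq_card hB.
    lia.
- move=> A B x y xA yB.
  rewrite Hm // sum_NN //; apply: eq_bigr => A' sA; apply: eq_bigr => B' sB.
  apply: H; [exact: (subsetP sA) | exact: (subsetP sB)].
Qed.
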